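(* Let $\Omega\subseteq\mathbb C^{n+m}$ be a domain which is $n$-star-shaped Hartogs in $(z_1,\dots,z_n)$, with points written $(z,z')$, $z'\in\mathbb C^m$. Let $\alpha_j>0$ and $\gamma_j>0$ for $1\le j\le n$, and let $$U^\alpha=\Big\{(z,z',w)\in\mathbb C^{n+m}\times\mathbb C:\Big(\tfrac{z_1}{(1-|w|^2)^{\alpha_1/2}},\dots,\tfrac{z_n}{(1-|w|^2)^{\alpha_n/2}},z'\Big)\in\Omega,\ |w|<1\Big\},$$ $$V^\gamma=\Big\{(z,z',w)\in\mathbb C^{n+m}\times\mathbb C:\big(e^{\gamma_1|w|^2/2}z_1,\dots,e^{\gamma_n|w|^2/2}z_n,z'\big)\in\Omega\Big\}.$$ Then $U^\alpha$ and $V^\gamma$ are $(n+1)$-star-shaped Hartogs in the variables $(z_1,\dots,z_n,w)$.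
   Context: A domain is $n$-star-shaped Hartogs in a set of $n$ of its complex variables $(u_1,\dots,u_n)$ if, whenever a point belongs to it, so does every point obtained by replacing each $u_j$ by $\lambda_ju_j$ with $\lambda_j\in\mathbb C$, $|\lambda_j|\le1$, keeping the other coordinates fixed. *)

(* Defs.v *)
From mathcomp Require Import all_boot all_order all_algebra.
From mathcomp Require Import all_classical all_reals all_analysis.
From mathcomp Require Export complex.
Import Order.TTheory GRing.Theory Num.Theory.

Set Implicit Arguments.
Unset Strict Implicit.
Unset Printing Implicit Defensive.

Local Open Scope ring_scope.
Local Open Scope classical_set_scope.

Definition cabs (R : realType) (u : R[i]) : R := ComplexField.Normc.normc u.

(* A point of C^(n+m) is written (z, z') with z : C^n, z' : C^m. *)
Definition pt (R : realType) (n m : nat) := (('I_n -> R[i]) * ('I_m -> R[i]))%type.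

(* openness in C^(n+m) for the usual (sup-norm, equivalently Euclidean) topology *)
Definition copen (R : realType) (n m : nat) (A : set (pt R n m)) : Prop :=
  forall p, A p -> exists2 e : R, 0 < e &
    forall q : pt R n m,
      (forall j, cabs (q.1 j - p.1 j) < e) ->
      (forall k, cabs (q.2 k - p.2 k) < e) -> A q.

Definition cconnected (R : realType) (n m : nat) (D : set (pt R n m)) : Prop :=
  forall A B : set (pt R n m), copen A -> copen B ->
    D `<=` A `|` B -> D `&` A `&` B = set0 ->
    D `&` A = set0 \/ D `&` B = set0.

Definition cdomain (R : realType) (n m : nat) (D : set (pt R n m)) : Prop :=
  D !=set0 /\ copen D /\ cconnected D.

Definition star_hartogs_z (R : realType) (n m : nat) (D : set (pt R n m)) : Prop :=
  forall (z : 'I_n -> R[i]) (z' : 'I_m -> R[i]) (lam : 'I_n -> R[i]),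
    (forall j, cabs (lam j) <= 1) ->
    D (z, z') -> D (fun j => lam j * z j, z').

Definition star_hartogs_zw (R : realType) (n m : nat)
    (D : set (pt R n m * R[i])) : Prop :=
  forall (z : 'I_n -> R[i]) (z' : 'I_m -> R[i]) (w : R[i])
         (lam : 'I_n -> R[i]) (mu : R[i]),
    (forall j, cabs (lam j) <= 1) -> cabs mu <= 1 ->
    D ((z, z'), w) -> D ((fun j => lam j * z j, z'), mu * w).

Definition Ualpha (R : realType) (n m : nat) (Om : set (pt R n m))
    (alpha : 'I_n -> R) : set (pt R n m * R[i]) :=
  [set p | let: ((z, z'), w) := p in
     cabs w < 1 /\
     Om (fun j => z j / ((1 - cabs w ^+ 2) `^ (alpha j / 2))%:C%C, z')].

Definition Vgamma (R : realType) (n m : nat) (Om : set (pt R n m))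
    (gamma : 'I_n -> R) : set (pt R n m * R[i]) :=
  [set p | let: ((z, z'), w) := p in
     Om (fun j => (expR (gamma j * cabs w ^+ 2 / 2))%:C%C * z j, z')].

(* Main.v *)
Require Import Defs.
From mathcomp Require Import all_boot all_order all_algebra.
From mathcomp Require Import all_classical all_reals all_analysis.
From mathcomp Require Import complex.
From mathcomp Require Import ring.
Import Order.TTheory GRing.Theory Num.Theory.
Local Open Scope ring_scope.
Local Open Scope classical_set_scope.

Lemma cabsM (R : realType) (x y : R[i]) : cabs (x * y) = cabs x * cabs y.
Proof. exact: ComplexField.Normc.normcM. Qed.

Lemma cabs_ge0 (R : realType) (x : R[i]) : 0 <= cabs x.
Proof. by case: x => a b; rewrite /cabs /=; apply: sqrtr_ge0. Qed.

Lemma cabsC (R : realType) (r : R) : cabs (r%:C)%C = `|r|.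
Proof. by rewrite /cabs /= expr0n /= addr0 sqrtr_sqr. Qed.

Lemma cabs_mul_le (R : realType) (mu w : R[i]) :
  cabs mu <= 1 -> cabs (mu * w) <= cabs w.
Proof.
move=> h; rewrite cabsM -[X in _ <= X]mul1r.
by apply: ler_wpM2r => //; apply: cabs_ge0.
Qed.

Lemma sq_le (R : realType) (a b : R) : 0 <= a -> a <= b -> a ^+ 2 <= b ^+ 2.
Proof. by move=> a0 ab; rewrite ler_sqr // ?nnegrE //; apply: le_trans ab. Qed.

Theorem lemma3p1 (R : realType) (n m : nat) (Om : set (pt R n m))
    (alpha gamma : 'I_n -> R) :
  cdomain Om -> star_hartogs_z Om ->
  (forall j, 0 < alpha j) -> (forall j, 0 < gamma j) ->
  star_hartogs_zw (Ualpha Om alpha) /\ star_hartogs_zw (Vgamma Om gamma).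
Proof.
move=> _ SH ha hg; split.
- move=> z z' w lam mu hlam hmu [hw hO].
  have hmw := @cabs_mul_le _ mu w hmu.
  have hsq := @sq_le _ _ _ (@cabs_ge0 _ (mu * w)) hmw.
  have hw2 : cabs w ^+ 2 < 1.
    by rewrite -(expr1n _ 2) ltr_pXn2r // ?nnegrE ?cabs_ge0.
  have s0 : 0 < 1 - cabs w ^+ 2 by rewrite subr_gt0.
  have s0' : 0 < 1 - cabs (mu * w) ^+ 2 by rewrite subr_gt0; apply: le_lt_trans hw2.
  have sle : 1 - cabs w ^+ 2 <= 1 - cabs (mu * w) ^+ 2 by rewrite lerD2l lerN2.
  split; first by apply: le_lt_trans hw.
  set P := fun j => (1 - cabs w ^+ 2) `^ (alpha j / 2).
  set Q := fun j => (1 - cabs (mu * w) ^+ 2) `^ (alpha j / 2).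
  have P0 : forall j, 0 < P j by move=> j; apply: powR_gt0.
  have Q0 : forall j, 0 < Q j by move=> j; apply: powR_gt0.
  have PQ : forall j, P j <= Q j.
    move=> j; apply: ge0_ler_powR => //; rewrite ?nnegrE.
    - by apply: divr_ge0 => //; apply: ltW.
    - exact: ltW.
    - exact: ltW.
  have := SH _ z' (fun j => lam j * (P j / Q j)%:C%C) _ hO.
  have -> : (fun j => lam j * (P j / Q j)%:C%C * (z j / (P j)%:C%C))
          = (fun j => lam j * z j / (Q j)%:C%C).
    apply: funext => j.
    have Pn : (P j)%:C%C != 0 by rewrite (inj_eq (@complexI _)) gt_eqF.
    have Qn : (Q j)%:C%C != 0 by rewrite (inj_eq (@complexI _)) gt_eqF.
    rewrite rmorphM /= fmorphV /=; field; by apply/andP.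
  apply => j; rewrite cabsM cabsC -[1]mulr1; apply: ler_pM => //.
  + exact: cabs_ge0.
  + by rewrite ger0_norm ?ler_pdivrMr ?mul1r // divr_ge0 // ltW.
- move=> z z' w lam mu hlam hmu hO.
  have hmw := @cabs_mul_le _ mu w hmu.
  have hsq := @sq_le _ _ _ (@cabs_ge0 _ (mu * w)) hmw.
  rewrite /Vgamma /= in hO *.
  set P := fun j => expR (gamma j * cabs w ^+ 2 / 2).
  set Q := fun j => expR (gamma j * cabs (mu * w) ^+ 2 / 2).
  have P0 : forall j, 0 < P j by move=> j; apply: expR_gt0.
  have Q0 : forall j, 0 < Q j by move=> j; apply: expR_gt0.
  have QP : forall j, Q j <= P j.
    move=> j; rewrite /P /Q ler_expR; apply: ler_wpM2r; first by rewrite invr_ge0.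
    by apply: ler_wpM2l => //; apply: ltW.
  have Hb : forall j, cabs (lam j * (Q j / P j)%:C%C) <= 1.
    move=> j; rewrite cabsM cabsC -[1]mulr1; apply: ler_pM => //.
    + exact: cabs_ge0.
    + by rewrite ger0_norm ?ler_pdivrMr ?mul1r // divr_ge0 // ltW.
  have E : forall j, lam j * (Q j / P j)%:C%C * ((P j)%:C%C * z j)
          = (Q j)%:C%C * (lam j * z j).
    move=> j.
    have Pn : (P j)%:C%C != 0 by rewrite (inj_eq (@complexI _)) gt_eqF.
    rewrite rmorphM /= fmorphV /=; field; exact: Pn.
  have H1 : Om (fun j => lam j * (Q j / P j)%:C%C * ((P j)%:C%C * z j), z')
    := SH _ z' _ Hb hO.
  rewrite (funext E) in H1; exact: H1.
Qed.
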